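(* Let $N\geq 1$ be an integer and let $k_N=\dfrac{1}{2^{N+4}}$. Let $(X,Y;E)$ be a finite bipartite graph (so $X,Y$ are finite disjoint sets and $E\subseteq X\times Y$) which has VC-minimal complexity $<N$. Then there exist $X'\subseteq X$ and $Y'\subseteq Y$ with $|X'|\geq k_N|X|$ and $|Y'|\geq k_N|Y|$ such that either $X'\times Y'\subseteq E$ or $(X'\times Y')\cap E=\emptyset$.
   Context: For $a\in X$ and $S\subseteq Y$ write $E(a,S)=\{b\in S:(a,b)\in E\}$. A family $\Psi$ of subsets of a set $U$ is a directed family if for any $B,B'\in\Psi$ one has $B\subseteq B'$ or $B'\subseteq B$ or $B\cap B'=\emptyset$; members of $\Psi$ are called $\Psi$-balls. A $\Psi$-Swiss cheese is a set of the form $B\setminus(B_1\cup\dots\cup B_n)$ with $B,B_1,\dots,B_n$ $\Psi$-balls ($n\ge 0$); $B$ is its outer ball and the $B_i$ are its holes. The bipartite graph $(X,Y;E)$ has VC-minimal complexity $<N$ if there is a directed family $\Psi$ of subsets of $Y$ such that for every $a\in X$, $E(a,Y)$ is a finite disjoint union of $\Psi$-Swiss cheeses $E(a,Y)=\dot\bigcup_{k=1}^{s}\big(B_{k1}\setminus(B_{k2}\cup\dots\cup B_{kd(k)})\big)$ in which the total number of outer balls plus holes satisfies $d(1)+\dots+d(s)<N$ (an empty union, $s=0$, is allowed). *)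

(* Defs.v *)
From mathcomp Require Import all_boot all_order all_algebra.
Set Implicit Arguments. Unset Strict Implicit. Unset Printing Implicit Defensive.

Section VCmin.
Variables (X Y : finType).

Definition nbhd (E : X -> Y -> bool) (a : X) : {set Y} := [set b | E a b].

Definition directed_family (Psi : {set {set Y}}) : Prop :=
  forall B B', B \in Psi -> B' \in Psi ->
    [|| B \subset B', B' \subset B | [disjoint B & B']].

(* A Swiss cheese given by its outer ball c.1 and its list of holes c.2:
   c.1 \ (union of the holes). *)
Definition swiss_cheese (c : {set Y} * seq {set Y}) : {set Y} :=
  c.1 :\: \bigcup_(H <- c.2) H.

Definition cheese_size (c : {set Y} * seq {set Y}) : nat := (size c.2).+1.

Definition vcmin_complexity_lt (E : X -> Y -> bool) (N : nat) : Prop :=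
  exists Psi : {set {set Y}}, directed_family Psi /\
    forall a : X, exists cs : seq ({set Y} * seq {set Y}),
      [/\ (forall c, c \in cs -> c.1 \in Psi /\ (forall H, H \in c.2 -> H \in Psi)),
          pairwise (fun c d => [disjoint swiss_cheese c & swiss_cheese d]) cs,
          nbhd E a = \bigcup_(c <- cs) swiss_cheese c
        & (\sum_(c <- cs) cheese_size c < N)%N].

End VCmin.

(* Main.v *)
Require Import Defs.
From mathcomp Require Import all_boot all_order all_algebra zify.
Import GRing.Theory Num.Theory.
Set Implicit Arguments. Unset Strict Implicit.

Lemma greedy (T : finType) (n : nat) (P : {set {set T}}) :
  (0 < n)%N -> trivIset P -> (forall K, K \in P -> 3 * #|K| < n)%N ->
  (n <= 3 * #|cover P|)%N ->
  exists2 Q : {set {set T}}, Q \subset P & (n <= 3 * #|cover Q| < 2 * n)%N.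
Proof.
move=> n0; move: {2}#|P| (leqnn #|P|) => k; elim: k P => [|k IH] P lePk tP small big.
  move: lePk; rewrite leqn0 cards_eq0 => /eqP P0.
  by move: big; rewrite P0 /cover big_set0 cards0; lia.
case: (set_0Vmem P) => [P0 | [p pP]].
  by move: big; rewrite P0 /cover big_set0 cards0; lia.
have sub: p \subset cover P by apply: bigcup_sup.
have tP': trivIset (P :\ p) by apply: trivIsetS tP; apply: subD1set.
have eqc: #|cover (P :\ p)| = #|cover P| - #|p| by rewrite coverD1 // cardsDS.
have cpP: (#|p| <= #|cover P|)%N by apply: subset_leq_card.
case: (leqP n (3 * #|cover (P :\ p)|)) => h.
  have [||Q QP hQ] := IH (P :\ p) _ tP' _ h.
  - by move: lePk; rewrite (cardsD1 p) pP; lia.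
  - by move=> K /setD1P [_ KP]; exact: small.
  by exists Q => //; apply: subset_trans QP (subD1set _ _).
exists P => //; have := small p pP; lia.
Qed.

Definition cutb (T : finType) (B Z : {set T}) :=
  (B :&: Z != set0) && ~~ (Z \subset B).

Lemma not_cutb (T : finType) (B Z : {set T}) :
  ~~ cutb B Z = (B :&: Z == set0) || (Z \subset B).
Proof. by rewrite /cutb negb_and negbK negbK. Qed.

Lemma split_lemma (T : finType) (Psi : {set {set T}}) (Z : {set T}) :
  directed_family Psi -> (2 <= #|Z|)%N ->
  exists Z1 : {set T}, [/\ Z1 \subset Z, (#|Z| <= 3 * #|Z1|)%N,
     (#|Z| <= 3 * #|Z :\: Z1|)%N &
     forall B, B \in Psi -> ~~ cutb B Z1 || ~~ cutb B (Z :\: Z1)].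
Proof.
move=> dP Z2; set n := #|Z|.
case: (leqP n 3) => n3.
  have: (0 < #|Z|)%N by lia.
  case/card_gt0P => y yZ; exists [set y]; split.
  - by rewrite sub1set.
  - by rewrite cards1; lia.
  - rewrite cardsDS ?sub1set // cards1 -/n; lia.
  move=> B _; apply/orP; left; rewrite not_cutb.
  case: (boolP (y \in B)) => yB; first by apply/orP; right; rewrite sub1set.
  apply/orP; left; apply/eqP/setP => x; rewrite !inE.
  by apply/negP => /andP [xB /eqP exy]; rewrite -exy xB in yB.
set Fam := [set B :&: Z | B in Psi] :|: [set Z].
have FamZ : forall W, W \in Fam -> W \subset Z.
  move=> W; rewrite inE => /orP [/imsetP [B _ ->]|]; first exact: subsetIr.
  by rewrite inE => /eqP ->.
have ZF : Z \in Fam by rewrite !inE eqxx orbT.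
have CF : forall B, B \in Psi -> B :&: Z \in Fam.
  by move=> B BP; rewrite inE; apply/orP; left; apply: imset_f.
have dF : forall C W, C \in Fam -> W \in Fam ->
    [|| C \subset W, W \subset C | [disjoint C & W]].
  move=> C W CF' WF.
  move: (CF'); rewrite inE => /orP [/imsetP [B BP eB]|]; last first.
    by rewrite inE => /eqP ->; rewrite FamZ ?orbT.
  move: (WF); rewrite inE => /orP [/imsetP [B' BP' eB']|]; last first.
    by rewrite inE => /eqP ->; rewrite FamZ.
  rewrite eB eB'; case/or3P: (dP B B' BP BP') => h.
  - by rewrite setSI.
  - by rewrite orbC -orbA setSI ?orbT.
  - apply/orP; right; apply/orP; right.
    apply: disjointWl (subsetIl _ _) _; apply: disjointWr (subsetIl _ _) _.
    exact: h.
set good := [pred W : {set T} | (W \in Fam) && (n <= 3 * #|W|)%N].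
have gZ : good Z by rewrite inE /= ZF; lia.
case: (arg_minnP (fun W : {set T} => #|W|) gZ) => W /andP [WF Wn] Wmin.
have WZ := FamZ W WF.
case: (leqP (3 * #|W|) (2 * n)) => hW.
  exists W; split => //.
  - by rewrite cardsDS // -/n; lia.
  move=> B BP; case/or3P: (dF _ _ (CF B BP) WF) => [CW|WC|dis].
  - apply/orP; right; rewrite not_cutb; apply/orP; left.
    apply/eqP/setP => x; rewrite !inE; apply/negP => /and3P [xB /negP xW xZ].
    by apply: xW; apply: (subsetP CW); rewrite inE xB.
  - apply/orP; left; rewrite not_cutb; apply/orP; right.
    exact: subset_trans WC (subsetIl _ _).
  - apply/orP; left; rewrite not_cutb; apply/orP; left.
    apply/eqP/setP => x; rewrite !inE; apply/negP => /andP [xB xW].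
    have xC : x \in B :&: Z by rewrite inE xB (subsetP WZ).
    by rewrite (disjointFr dis xC) in xW.
set M := [set C in Fam | C \proper W] :|: [set [set y] | y in W].
set P := [set K | maxset (fun K => K \in M) K].
have MW : forall K, K \in M -> K \subset W.
  move=> K; rewrite in_setU in_set => /orP [/andP [_ /proper_sub //]|/imsetP [y yW ->]].
  by rewrite sub1set.
have Msmall : forall K, K \in M -> (3 * #|K| < n)%N.
  move=> K; rewrite in_setU in_set => /orP [/andP [KF KW]|/imsetP [y yW ->]]; last first.
    by rewrite cards1; lia.
  have := proper_card KW; case: (leqP n (3 * #|K|)) => // h.
  have := Wmin K; rewrite inE /= KF h => /(_ isT); lia.
have dM : forall K K', K \in M -> K' \in M ->
    [|| K \subset K', K' \subset K | [disjoint K & K']].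
  move=> K K' KM K'M.
  move: (KM); rewrite in_setU in_set => /orP [/andP [KF _]|/imsetP [y yW eK]].
    move: (K'M); rewrite in_setU in_set => /orP [/andP [K'F _]|/imsetP [y' yW' eK']].
      exact: dF.
    rewrite eK' disjoint_sym disjoints1 sub1set.
    by case: (y' \in K); rewrite ?orbT.
  rewrite eK disjoints1 sub1set.
  by case: (y \in K'); rewrite ?orbT.
have inP : forall K, K \in P ->
    K \in M /\ (forall K', K' \in M -> K \subset K' -> K' = K).
  by move=> K; rewrite inE => /maxsetP.
have tP : trivIset P.
  apply/trivIsetP => K K' KP K'P neq.
  have [KM Kmax] := inP K KP; have [K'M K'max] := inP K' K'P.
  case/or3P: (dM K K' KM K'M) => // h.
  - by rewrite (Kmax K' K'M h) eqxx in neq.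
  - by rewrite (K'max K KM h) eqxx in neq.
have exP : forall C, C \in M -> exists2 K, K \in P & C \subset K.
  move=> C CM; have [K KM CK] := maxset_exists (P := fun K => K \in M) CM.
  by exists K => //; rewrite inE.
have coverP : cover P = W.
  apply/eqP; rewrite eqEsubset; apply/andP; split.
    by apply/bigcupsP => K /inP [KM _]; exact: MW.
  apply/subsetP => y yW.
  have yM : [set y] \in M by rewrite inE; apply/orP; right; apply: imset_f.
  have [K KP yK] := exP _ yM.
  by apply/bigcupP; exists K => //; rewrite -sub1set.
have n0 : (0 < n)%N by lia.
have [Q QP hQ] := @greedy _ n P n0 tP (fun K KP => Msmall K (proj1 (inP K KP)))
   (ltac:(rewrite coverP; lia)).
have Z1W : cover Q \subset W.
  rewrite -coverP; apply/bigcupsP => K KQ.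
  by apply: bigcup_sup; apply: (subsetP QP).
have Z1Z := subset_trans Z1W WZ.
exists (cover Q); split => //.
- by lia.
- by rewrite cardsDS // -/n; lia.
move=> B BP; case/or3P: (dF _ _ (CF B BP) WF) => [CW|WC|dis].
- case: (eqVneq (B :&: Z) W) => [eCW | nCW].
    apply/orP; left; rewrite not_cutb; apply/orP; right.
    by apply: subset_trans Z1W _; rewrite -eCW subsetIl.
  have CM : B :&: Z \in M by rewrite in_setU in_set CF //= properEneq nCW CW.
  have [K KP CK] := exP _ CM.
  case: (boolP (K \in Q)) => KQ.
    apply/orP; right; rewrite not_cutb; apply/orP; left.
    apply/eqP/setP => x; rewrite !inE; apply/negP => /and3P [xB /negP xQ xZ].
    apply: xQ; apply/bigcupP; exists K => //; apply: (subsetP CK).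
    by rewrite inE xB.
  apply/orP; left; rewrite not_cutb; apply/orP; left.
  apply/eqP/setP => x; rewrite !inE; apply/negP => /andP [xB xQ].
  move: (xQ) => /bigcupP [K' K'Q xK'].
  have xK : x \in K by apply: (subsetP CK); rewrite inE xB (subsetP Z1Z).
  have neq : K != K' by apply: contraNneq KQ => ->.
  have := (trivIsetP tP) K K' KP (subsetP QP _ K'Q) neq.
  by move=> dis; rewrite (disjointFr dis xK) in xK'.
- apply/orP; left; rewrite not_cutb; apply/orP; right.
  exact: subset_trans Z1W (subset_trans WC (subsetIl _ _)).
- apply/orP; left; rewrite not_cutb; apply/orP; left.
  apply/eqP/setP => x; rewrite !inE; apply/negP => /andP [xB xQ].
  have xC : x \in B :&: Z by rewrite inE xB (subsetP Z1Z).
  have xW : x \in W by apply: (subsetP Z1W).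
  by rewrite (disjointFr dis xC) in xW.
Qed.
Local Open Scope nat_scope.

Lemma cut_mono (T : finType) (B Z1 Z : {set T}) :
  Z1 \subset Z -> cutb B Z1 -> cutb B Z.
Proof.
move=> sZ /andP [n1 n2]; apply/andP; split.
  apply: contraNneq n1 => e; apply/eqP; apply/setP => x; rewrite !inE.
  apply/negP => /andP [xB xZ1].
  have : x \in B :&: Z by rewrite inE xB (subsetP sZ).
  by rewrite e inE.
by apply: contra n2 => h; exact: subset_trans sZ h.
Qed.

Lemma small_nocut (T : finType) (B Z : {set T}) : (#|Z| <= 1)%N -> ~~ cutb B Z.
Proof.
move=> hZ; rewrite not_cutb.
case: (set_0Vmem (B :&: Z)) => [->|[z]]; first by rewrite eqxx.
rewrite inE => /andP [zB zZ]; apply/orP; right; apply/subsetP => x xZ.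
have e := (card_le1_eqP hZ) x z xZ zZ.
by rewrite -e.
Qed.

Lemma main_lemma (X T : finType) (Psi : {set {set T}}) (S : X -> {set {set T}}) (d : nat) :
 directed_family Psi -> (forall a, S a \subset Psi) ->
 forall (Z : {set T}) (A : {set X}),
 (forall a, a \in A -> #|[set B in S a | cutb B Z]| < 2 ^ d)%N ->
 exists (Z' : {set T}) (A' : {set X}), [/\ Z' \subset Z, A' \subset A,
   (#|Z| <= 3 ^ d * #|Z'|)%N, (#|A| <= 2 ^ d * #|A'|)%N &
   forall a B, a \in A' -> B \in S a -> ~~ cutb B Z'].
Proof.
move=> dP SP; elim: d => [|d IH] Z A hA.
  exists Z, A; split => //; rewrite ?expn0 ?mul1n //.
  move=> a B aA BS; move: (hA a aA); rewrite expn0 ltnS leqn0 cards_eq0 => /eqP e.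
  apply/negP => c; have : B \in [set B in S a | cutb B Z] by rewrite inE BS c.
  by rewrite e inE.
case: (leqP #|Z| 1) => hZ.
  exists Z, A; split => //.
  - by apply: leq_pmull; rewrite expn_gt0.
  - by apply: leq_pmull; rewrite expn_gt0.
  by move=> a B _ _; apply: small_nocut.
have [Z1 [Z1Z h1 h2 good]] := split_lemma dP hZ.
set T1 := fun a => [set B in S a | cutb B Z1].
set T2 := fun a => [set B in S a | cutb B (Z :\: Z1)].
have key : forall a, a \in A -> (#|T1 a| < 2 ^ d)%N || (#|T2 a| < 2 ^ d)%N.
  move=> a aA.
  have sub : T1 a :|: T2 a \subset [set B in S a | cutb B Z].
    apply/subsetP => B; rewrite !inE => /orP [] /andP [BS c]; rewrite BS /=.
      exact: cut_mono Z1Z c.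
    exact: cut_mono (subsetDl _ _) c.
  have dis : T1 a :&: T2 a = set0.
    apply/setP => B; rewrite !inE; apply/negP => /andP [/andP [BS c1] /andP [_ c2]].
    by have := good B (subsetP (SP a) B BS); rewrite c1 c2.
  have := subset_leq_card sub; rewrite cardsU dis cards0 subn0.
  have := hA a aA; rewrite expnS; lia.
set A1 := [set a in A | (#|T1 a| < 2 ^ d)%N].
have A1A : A1 \subset A by apply/subsetP => a; rewrite inE => /andP [].
have cA := cardsDS A1A.
have cA1 := subset_leq_card A1A.
case: (leqP #|A| (2 * #|A1|)) => hA1.
  have [|Z' [A' [Z'Z A'A hz ha hc]]] := IH Z1 A1.
    by move=> a; rewrite inE => /andP [].
  exists Z', A'; split => //.
  - exact: subset_trans Z'Z Z1Z.
  - exact: subset_trans A'A A1A.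
  - by rewrite expnS -mulnA; apply: leq_trans h1 _; rewrite leq_mul2l hz orbT.
  - by rewrite expnS -mulnA; apply: leq_trans hA1 _; rewrite leq_mul2l ha orbT.
have [|Z' [A' [Z'Z A'A hz ha hc]]] := IH (Z :\: Z1) (A :\: A1).
  move=> a; rewrite !inE => /andP [na aA]; rewrite aA /= in na.
  by have := key a aA; rewrite (negbTE na).
exists Z', A'; split => //.
- exact: subset_trans Z'Z (subsetDl _ _).
- exact: subset_trans A'A (subsetDl _ _).
- by rewrite expnS -mulnA; apply: leq_trans h2 _; rewrite leq_mul2l hz orbT.
- rewrite expnS -mulnA; apply: leq_trans _ (leq_mul (leqnn 2) ha); rewrite cA; lia.
Qed.

Lemma exists_d (N : nat) : (1 <= N)%N -> exists d, (N <= 2 ^ d /\ 2 * d <= N + 3)%N.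
Proof.
have aux : forall d, (2 * d <= 2 ^ d + 2)%N.
  elim=> [//|d IH]; rewrite expnS; case: d IH => [//|d] IH.
  have : (1 <= 2 ^ d.+1)%N by rewrite expn_gt0.
  lia.
elim: N => [//|N IH] _.
case: N IH => [|N] IH; first by exists 0.
have [d [h1 h2]] := IH isT.
case: (leqP N.+2 (2 ^ d)) => h; first by exists d; split => //; lia.
exists d.+1; split.
  rewrite expnS; have : (1 <= 2 ^ d)%N by rewrite expn_gt0. lia.
have := aux d; lia.
Qed.

Lemma exp34 d : (3 ^ d <= 4 ^ d)%N.
Proof. by elim: d => [//|d IH]; rewrite !expnS leq_mul. Qed.

Lemma conv (K m k : nat) :
  (m <= 2 ^ K * k)%N -> (1 / (2 ^+ K) * m%:R <= k%:R :> rat)%R.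
Proof.
move=> h; rewrite mul1r mulrC ler_pdivrMr ?exprn_gt0 //.
by rewrite -natrX -natrM ler_nat mulnC.
Qed.

Definition ballset (T : finType) (s : seq ({set T} * seq {set T})) : {set {set T}} :=
  \bigcup_(c <- s) (c.1 |: [set H | H \in c.2]).

Lemma card_ballset (T : finType) (s : seq ({set T} * seq {set T})) :
  (#|ballset s| <= \sum_(c <- s) cheese_size c)%N.
Proof.
rewrite /ballset; elim: s => [|c s IH]; first by rewrite !big_nil cards0.
rewrite !big_cons; apply: leq_trans (leq_card_setU _ _) _.
apply: leq_add => //; rewrite cardsU1 /cheese_size.
have := card_size c.2; rewrite -(cardsE (mem c.2)).
have -> : [set x in mem c.2] = [set H | H \in c.2] by apply/setP => x; rewrite !inE.
by case: (c.1 \notin _) => /= h; [rewrite add1n ltnS | rewrite add0n (leq_trans h)].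
Qed.

Lemma det_bigcup (T : finType) (s : seq {set T}) y y' :
  (forall B, B \in s -> (y \in B) = (y' \in B)) ->
  (y \in \bigcup_(H <- s) H) = (y' \in \bigcup_(H <- s) H).
Proof.
elim: s => [|H s IH] h; first by rewrite !big_nil !inE.
rewrite !big_cons !in_setU (h H (mem_head _ _)) IH // => B Bs.
by apply: h; rewrite in_cons Bs orbT.
Qed.

Lemma det_cheese (T : finType) (s : seq ({set T} * seq {set T})) y y' :
  (forall B, B \in ballset s -> (y \in B) = (y' \in B)) ->
  (y \in \bigcup_(c <- s) swiss_cheese c) = (y' \in \bigcup_(c <- s) swiss_cheese c).
Proof.
rewrite /ballset; elim: s => [|c s IH] h; first by rewrite !big_nil !inE.
move: h; rewrite !big_cons => h.
rewrite !in_setU IH; last by move=> B Bs; apply: h; rewrite in_setU Bs orbT.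
congr (_ || _); rewrite /swiss_cheese !in_setD.
rewrite (h c.1); last by rewrite !inE eqxx.
rewrite (@det_bigcup _ c.2 y y') // => B Bs.
by apply: h; rewrite !inE Bs orbT.
Qed.

Lemma ballset_sub (T : finType) (Psi : {set {set T}}) (s : seq ({set T} * seq {set T})) :
  (forall c, c \in s -> c.1 \in Psi /\ (forall H, H \in c.2 -> H \in Psi)) ->
  ballset s \subset Psi.
Proof.
rewrite /ballset; elim: s => [|c s IH] h; first by rewrite big_nil sub0set.
rewrite big_cons subUset IH; last by move=> c' c's; apply: h; rewrite in_cons c's orbT.
have [h1 h2] := h c (mem_head _ _).
rewrite subUset sub1set h1 /= andbT.
by apply/subsetP => H; rewrite inE => Hc; exact: h2 H Hc.
Qed.

Local Open Scope ring_scope.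
Theorem theorem3p1 (N : nat) (X Y : finType) (E : X -> Y -> bool) :
  (1 <= N)%N ->
  vcmin_complexity_lt E N ->
  let kN : rat := 1 / (2 ^+ (N + 4)) in
  exists (X' : {set X}) (Y' : {set Y}),
    [/\ kN * (#|X|)%:R <= (#|X'|)%:R,
        kN * (#|Y|)%:R <= (#|Y'|)%:R
      & (forall x y, x \in X' -> y \in Y' -> E x y) \/
        (forall x y, x \in X' -> y \in Y' -> ~~ E x y)].
Proof.
move=> N1 [Psi [dP hcs]] kN; rewrite /kN.
have [cs hcs'] := fin_all_exists hcs.
pose S := fun a => ballset (cs a).
have SP : forall a, S a \subset Psi.
  move=> a; have [h1 _ _ _] := hcs' a.
  exact: ballset_sub.
have Sdet : forall a y y', (forall B, B \in S a -> (y \in B) = (y' \in B)) ->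
    E a y = E a y'.
  move=> a y y' h; have [_ _ hn _] := hcs' a.
  have eE : forall z, E a z = (z \in nbhd E a) by move=> z; rewrite inE.
  by rewrite !eE hn; exact: det_cheese.
have Scard : forall a, (#|S a| < N)%N.
  move=> a; have [_ _ _ h4] := hcs' a.
  exact: leq_ltn_trans (card_ballset _) h4.
have [d [hd1 hd2]] := exists_d N1.
have hyp : forall a, a \in [set: X] ->
    (#|[set B in S a | cutb B [set: Y]]| < 2 ^ d)%N.
  move=> a _; apply: leq_ltn_trans (leq_trans (Scard a) hd1).
  by apply: subset_leq_card; apply/subsetP => B; rewrite inE => /andP [].
have [Z' [A' [_ _ hz ha hc]]] := @main_lemma X Y Psi S d dP SP setT setT hyp.
have const : forall a y y', a \in A' -> y \in Z' -> y' \in Z' -> E a y = E a y'.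
  move=> a y y' aA yZ y'Z; apply: Sdet => B BS.
  have := hc a B aA BS; rewrite not_cutb => /orP [/eqP e | sub].
    have nb : forall w, w \in Z' -> (w \in B) = false.
      move=> w wZ; apply/negP => wB.
      have : w \in B :&: Z' by rewrite inE wB wZ.
      by rewrite e inE.
    by rewrite (nb y yZ) (nb y' y'Z).
  by rewrite (subsetP sub y yZ) (subsetP sub y' y'Z).
have hX : forall k, (#|A'| <= 2 * k)%N -> (#|X| <= 2 ^ (N + 4) * k)%N.
  move=> k hk; rewrite -cardsT; apply: leq_trans ha _.
  apply: leq_trans (leq_mul (leqnn _) hk) _; rewrite mulnA -expnSr.
  by apply: leq_mul => //; apply: leq_pexp2l => //; lia.
have hY : (#|Y| <= 2 ^ (N + 4) * #|Z'|)%N.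
  rewrite -cardsT; apply: leq_trans hz _; apply: leq_mul => //.
  apply: leq_trans (exp34 d) _; have -> : 4%N = (2 ^ 2)%N by [].
  by rewrite -expnM; apply: leq_pexp2l => //; lia.
case: (set_0Vmem Z') => [Z0 | [z zZ]].
  exists setT, set0; split.
  - by apply: conv; rewrite cardsT; apply: leq_pmull; rewrite expn_gt0.
  - by apply: conv; move: hY; rewrite Z0 cards0 muln0.
  - by left => x y _; rewrite inE.
pose A1 := [set a in A' | E a z].
have A1A : A1 \subset A' by apply/subsetP => a; rewrite inE => /andP [].
case: (leqP #|A'| (2 * #|A1|)) => h.
  exists A1, Z'; split; [exact: conv (hX _ h) | exact: conv hY |].
  left => x y; rewrite inE => /andP [xA Exz] yZ.
  by rewrite (const x y z xA yZ zZ).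
exists (A' :\: A1), Z'; split; [|exact: conv hY|].
  by apply: conv; apply: hX; rewrite cardsDS //; have := subset_leq_card A1A; lia.
right => x y; rewrite !inE => /andP [nA1 xA] yZ; rewrite xA /= in nA1.
by rewrite (const x y z xA yZ zZ).
Qed.
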